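(* Let $\varphi(\bm x,\bm y,\bm z)$ be the conjunction $\bigwedge_{i=1}^n \bm r_i^\top\bm x<\bm s_i^\top\bm y+\bm t_i^\top\bm z+h_i\ \wedge\ \bigwedge_{j=1}^m \bm u_j^\top\bm x\approx^j_{e_j}\bm v_j^\top\bm y+\bm w_j^\top\bm z+d_j$ as in the context, and let $\bm c$ be an integer vector. Then $\exists^{\mathsf{ram}}\bm x,\bm y\colon\varphi(\bm x,\bm y,\bm c)$ holds over $\mathbb{Z}$ if and only if there exists an admissible profile $\bm p\in\mathbb{Z}_\omega^{2n}$ such that some sequence is compatible with $\bm p$ for $\bm c$.
   Context: All vectors $\bm r_i,\bm s_i,\bm t_i,\bm u_j,\bm v_j,\bm w_j$ are integer vectors, $h_i,d_j\in\mathbb{Z}$, $e_j>0$, and each $\approx^j_{e_j}$ is either $\equiv_{e_j}$ or $\not\equiv_{e_j}$, where $s\equiv_e t$ means $e\mid s-t$. Let $\mathbb{Z}_\omega=\mathbb{Z}\cup\{\omega\}$ with $\omega$ larger than all integers. A profile is a vector $\bm p=(p_1,\dots,p_{2n})\in\mathbb{Z}_\omega^{2n}$. For an integer vector $\bm c$, a sequence $\bm a_1,\bm a_2,\dots$ of pairwise distinct integer vectors is compatible with $\bm p$ for $\bm c$ if for all $k<\ell$ and all $j$, $\bm u_j^\top\bm a_k\approx^j_{e_j}\bm v_j^\top\bm a_\ell+\bm w_j^\top\bm c+d_j$, and for all $i\in[1,n]$: $\sup\{\bm r_i^\top\bm a_k\mid k\ge1\}\le p_{2i-1}$ and $p_{2i}\le\liminf\{\bm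 s_i^\top\bm a_k+\bm t_i^\top\bm c+h_i\mid k\ge1\}$ (where sup/liminf equal to $+\infty$ is identified with $\omega$). A profile is admissible if for every $i\in[1,n]$, $p_{2i-1}<p_{2i}$ or $p_{2i}=\omega$. Ramsey quantifier: $\exists^{\mathsf{ram}}\bm x,\bm y\colon\varphi(\bm x,\bm y,\bm c)$ holds iff there is an infinite sequence of pairwise distinct integer vectors $(\bm a_i)_{i\ge1}$ with $\varphi(\bm a_i,\bm a_j,\bm c)$ for all $i<j$. *)

(* Defs.v *)
From mathcomp Require Import all_boot all_order all_algebra intdiv.
Set Implicit Arguments. Unset Strict Implicit. Unset Printing Implicit Defensive.
Import Order.TTheory GRing.Theory Num.Theory.
Local Open Scope ring_scope.

Definition dotz (k : nat) (a b : 'rV[int]_k) : int := \sum_(i < k) a 0 i * b 0 i.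

(* Z_omega = Z ∪ {omega}, omega larger than every integer *)
Inductive zomega := Fin of int | Omega.

(* congruence relation  ≈_e : flag = true means ≡_e, flag = false means ≢_e *)
Definition approx (flag : bool) (e s t : int) : Prop :=
  if flag then ((e %| s - t)%Z : Prop) else ~~ (e %| s - t)%Z.

(* sup {f k | k >= 1} <= p  (sup = +oo identified with omega) *)
Definition sup_le (f : nat -> int) (p : zomega) : Prop :=
  match p with
  | Omega => True
  | Fin q => forall k, f k <= q
  end.

(* p <= liminf {f k | k >= 1}, unfolded for integer-valued sequences:
   liminf = +oo (= omega) iff f tends to +oo; for an integer q,
   q <= liminf f iff eventually q <= f k. *)
Definition le_liminf (p : zomega) (f : nat -> int) : Prop :=
  match p with
  | Omega => forall M : int, exists N, forall k, (N <= k)%N -> M <= f k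
  | Fin q => exists N, forall k, (N <= k)%N -> q <= f k
  end.

Definition zlt (a b : zomega) : Prop :=
  match a, b with
  | Fin x, Fin y => x < y
  | Fin _, Omega => True
  | Omega, _ => False
  end.

(* A profile p in Z_omega^{2n} is given by pO i = p_{2i-1}, pE i = p_{2i}. *)
Definition admissible (n : nat) (pO pE : 'I_n -> zomega) : Prop :=
  forall i, zlt (pO i) (pE i) \/ pE i = Omega.

Definition compatible (d l n m : nat)
  (r s : 'I_n -> 'rV[int]_d) (t : 'I_n -> 'rV[int]_l) (h : 'I_n -> int)
  (u v : 'I_m -> 'rV[int]_d) (w : 'I_m -> 'rV[int]_l) (dd e : 'I_m -> int)
  (flag : 'I_m -> bool)
  (c : 'rV[int]_l) (pO pE : 'I_n -> zomega) (a : nat -> 'rV[int]_d) : Prop :=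
  injective a /\
  (forall k k' j, (k < k')%N ->
     approx (flag j) (e j) (dotz (u j) (a k))
            (dotz (v j) (a k') + dotz (w j) c + dd j)) /\
  (forall i, sup_le (fun k => dotz (r i) (a k)) (pO i) /\
             le_liminf (pE i) (fun k => dotz (s i) (a k) + dotz (t i) c + h i)).

Definition phi (d l n m : nat)
  (r s : 'I_n -> 'rV[int]_d) (t : 'I_n -> 'rV[int]_l) (h : 'I_n -> int)
  (u v : 'I_m -> 'rV[int]_d) (w : 'I_m -> 'rV[int]_l) (dd e : 'I_m -> int)
  (flag : 'I_m -> bool) (x y : 'rV[int]_d) (z : 'rV[int]_l) : Prop :=
  (forall i, dotz (r i) x < dotz (s i) y + dotz (t i) z + h i) /\
  (forall j, approx (flag j) (e j) (dotz (u j) x) (dotz (v j) y + dotz (w j) z + dd j)).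

Definition ramsey_exists (d : nat) (P : 'rV[int]_d -> 'rV[int]_d -> Prop) : Prop :=
  exists a : nat -> 'rV[int]_d, injective a /\ forall i j, (i < j)%N -> P (a i) (a j).

(* Main.v *)
Require Import Defs.
From mathcomp Require Import all_boot all_order all_algebra.
From mathcomp Require Import zify.
From Stdlib Require Import Classical ClassicalEpsilon.
Local Open Scope ring_scope.
Set Implicit Arguments.

Lemma descent {f : nat -> int}
  (Hn : ~ exists Q, (forall k, f k <= Q) /\ exists k0, Q <= f k0) :
  forall N : nat, forall M : int, (forall k, f k <= M) -> M - f 0%N <= N%:Z -> False.
Proof.
elim=> [|N IH] M HM HN.
  by apply: Hn; exists M; split => //; exists 0%N; lia.
case: (classic (exists k0, M <= f k0)) => [[k0 Hk0]|Hno].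
  by apply: Hn; exists M; split => //; exists k0.
apply: (IH (M - 1)); last by lia.
move=> k; have := HM k; have : ~ (M <= f k) by move=> H; apply: Hno; exists k.
move=> H1 H2; case: (boolP (M <= f k)) => // H3; lia.
Qed.

Lemma max_or_unb (f : nat -> int) :
  (exists Q, (forall k, f k <= Q) /\ exists k0, Q <= f k0) \/
  (forall M, exists k, M < f k).
Proof.
case: (classic (exists Q, (forall k, f k <= Q) /\ exists k0, Q <= f k0)) => H; first by left.
right => M; apply: NNPP => Hne.
have HM : forall k, f k <= M.
  move=> k; case: (boolP (f k <= M)) => // H1; exfalso; apply: Hne; exists k; lia.
have := descent H (absz (M - f 0%N)) M HM; lia.
Qed.

Lemma fwd (f g : nat -> int) (H : forall k l, (k < l)%N -> f k < g l) :
  exists p : zomega * zomega,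
    (zlt p.1 p.2 \/ p.2 = Omega) /\ sup_le f p.1 /\ le_liminf p.2 g.
Proof.
case: (max_or_unb f) => [[Q [HQ [k0 Hk0]]]|Hu].
  exists (Fin Q, Fin (Q + 1)); split; first by left => /=; lia.
  split => //=; exists k0.+1 => l Hl; have := H k0 l Hl; lia.
exists (Omega, Omega); split; first by right.
split => //= M; have [k Hk] := Hu M; exists k.+1 => l Hl; have := H k l Hl; lia.
Qed.

Lemma fin_bound (f : nat -> int) K : exists B, forall k, (k <= K)%N -> f k < B.
Proof.
elim: K => [|K [B HB]].
  by exists (f 0%N + 1) => k; rewrite leqn0 => /eqP ->; lia.
case: (boolP (f K.+1 < B)) => HK.
  exists B => k; rewrite leq_eqVlt => /orP [/eqP -> //|]; rewrite ltnS; exact: HB.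
exists (f K.+1 + 1) => k; rewrite leq_eqVlt => /orP [/eqP ->|]; first lia.
rewrite ltnS => Hk; have := HB k Hk; lia.
Qed.

Lemma bwd (f g : nat -> int) po pe :
  (zlt po pe \/ pe = Omega) -> sup_le f po -> le_liminf pe g ->
  forall K, exists N, forall l, (N <= l)%N -> forall k, (k <= K)%N -> f k < g l.
Proof.
move=> Ha Hs Hl K; case: pe Ha Hl => [q'|] Ha Hl.
  case: po Ha Hs => [q|] [Ha|//] Hs //=.
  have [N HN] := Hl; exists N => l Hnl k _; have := HN l Hnl; have := Hs k.
  move: Ha => /= Ha; lia.
have [B HB] := fin_bound f K; have [N HN] := Hl B.
exists N => l Hnl k Hk; have := HN l Hnl; have := HB k Hk; lia.
Qed.

Lemma choose_fun (A B : Type) (P : A -> B -> Prop) :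
  (forall a, exists b, P a b) -> exists F : A -> B, forall a, P a (F a).
Proof.
move=> H; exists (fun a => proj1_sig (constructive_indefinite_description _ (H a))).
move=> a; exact: proj2_sig.
Qed.

Fixpoint gseq (F : nat -> nat) (j : nat) : nat :=
  match j with 0%N => 0%N | j'.+1 => maxn (gseq F j').+1 (F (gseq F j')) end.

Lemma gseq_add F j k : (gseq F j.+1 <= gseq F (j.+1 + k))%N.
Proof.
elim: k => [|k IH]; first by rewrite addn0.
rewrite addnS /=; apply: leq_trans IH _; apply: leq_trans (leq_maxl _ _); exact: leqnSn.
Qed.

Lemma gseq_lt F j j' : (j < j')%N -> (gseq F j.+1 <= gseq F j')%N.
Proof. move=> H; rewrite -(subnKC H); exact: gseq_add. Qed.

Lemma gseq_inc F j j' : (j < j')%N -> (gseq F j < gseq F j')%N.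
Proof.
move=> H; have H1 := @gseq_lt F j j' H.
have H2 : ((gseq F j).+1 <= gseq F j.+1)%N by rewrite /=; exact: leq_maxl.
exact: leq_trans H2 H1.
Qed.

Unset Implicit Arguments.
Theorem mainTheorem7 (d l n m : nat)
  (r s : 'I_n -> 'rV[int]_d) (t : 'I_n -> 'rV[int]_l) (h : 'I_n -> int)
  (u v : 'I_m -> 'rV[int]_d) (w : 'I_m -> 'rV[int]_l) (dd e : 'I_m -> int)
  (flag : 'I_m -> bool)
  (he : forall j, 0 < e j)
  (c : 'rV[int]_l) :
  ramsey_exists (fun x y => phi r s t h u v w dd e flag x y c) <->
  exists (pO pE : 'I_n -> zomega), admissible pO pE /\
    exists a : nat -> 'rV[int]_d, compatible r s t h u v w dd e flag c pO pE a.
Proof.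
split.
  move=> [a [Hinj Hphi]].
  have Hex : forall i, exists p : zomega * zomega,
      (zlt p.1 p.2 \/ p.2 = Omega) /\ sup_le (fun k => dotz (r i) (a k)) p.1 /\
      le_liminf p.2 (fun k => dotz (s i) (a k) + dotz (t i) c + h i).
    move=> i; apply: fwd => k k' Hk; exact: ((Hphi k k' Hk).1 i).
  have [F HF] := @choose_fun _ _ _ Hex.
  exists (fun i => (F i).1), (fun i => (F i).2); split.
    by move=> i; case: (HF i).
  exists a; split => //; split.
    by move=> k k' j Hk; exact: ((Hphi k k' Hk).2 j).
  by move=> i; case: (HF i) => _ [H1 H2].
move=> [pO [pE [Had [a [Hinj [Hcong Hlim]]]]]].
have Hb : forall i K, exists N, forall l0, (N <= l0)%N -> forall k, (k <= K)%N ->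
    dotz (r i) (a k) < dotz (s i) (a l0) + dotz (t i) c + h i.
  move=> i; have [H1 H2] := Hlim i; exact: (@bwd _ _ _ _ (Had i) H1 H2).
have HK : forall K, exists N, forall i l0, (N <= l0)%N -> forall k, (k <= K)%N ->
    dotz (r i) (a k) < dotz (s i) (a l0) + dotz (t i) c + h i.
  move=> K; have [Nf HNf] := @choose_fun _ _ _ (fun i => Hb i K).
  exists (\max_i Nf i) => i l0 Hl0 k Hk; apply: (HNf i) => //.
  apply: (leq_trans _ Hl0); exact: leq_bigmax.
have [Nfun HN] := @choose_fun _ _ _ HK.
exists (fun j => a (gseq Nfun j)); split.
  move=> x y /Hinj Hxy; case: (ltngtP x y) => // Hc.
    by have := @gseq_inc Nfun _ _ Hc; rewrite Hxy ltnn.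
  by have := @gseq_inc Nfun _ _ Hc; rewrite Hxy ltnn.
move=> j j' Hj; split.
  move=> i; apply: (HN (gseq Nfun j)) => //.
  apply: leq_trans (@gseq_lt Nfun _ _ Hj); rewrite /=; exact: leq_maxr.
move=> jj; apply: Hcong; exact: gseq_inc.
Qed.
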